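(* Let $A\in\mathbb{R}^{n\times n}$, $B\in\mathbb{R}^{n\times m}$, $C\in\mathbb{R}^{m\times n}$, $D\in\mathbb{R}^{m\times m}$ with $D+D^T=0$, and consider the system $\dot x=Ax+Bu$, $y=Cx+Du$. The following two statements are equivalent: (1) There exists a change of basis $x=Tz$ with an invertible $T\in\mathbb{R}^{n\times n}$ such that the resulting realization $(T^{-1}AT,\,T^{-1}B,\,CT,\,D)$ has port-Hamiltonian structure, i.e. there exist $J,R,Q\in\mathbb{R}^{n\times n}$, $F,P\in\mathbb{R}^{n\times m}$, $S,N\in\mathbb{R}^{m\times m}$ with $J=-J^T$, $R=R^T$, $Q=Q^T$ positive definite, $S=S^T$, $N=-N^T$, $\begin{bmatrix}R&P\\P^T&S\end{bmatrix}$ symmetric positive semidefinite, and $T^{-1}AT=(J-R)Q$, $T^{-1}B=F-P$, $CT=(F+P)^TQ$, $D=S+N$. (2) There exists an invertible matrix $T\in\mathbb{R}^{n\times n}$ such that $(TB)^T=CT^{-1}$ and $(TAT^{-1})^T+TAT^{-1}$ is negative semidefinite. *)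

(* Defs.v *)
From HB Require Import structures.
From mathcomp Require Import all_boot all_order all_algebra.
From mathcomp Require Import reals.
Set Implicit Arguments. Unset Strict Implicit. Unset Printing Implicit Defensive.
Import Order.TTheory GRing.Theory Num.Theory.
Local Open Scope ring_scope.

Definition qform (R : realType) (k : nat) (M : 'M[R]_k) (x : 'rV[R]_k) : R :=
  (x *m M *m x^T) 0 0.

Definition sym_mx (R : realType) (k : nat) (M : 'M[R]_k) : Prop := M^T = M.
Definition skew_sym (R : realType) (k : nat) (M : 'M[R]_k) : Prop := M^T = - M.

Definition posdefmx (R : realType) (k : nat) (M : 'M[R]_k) : Prop :=
  sym_mx M /\ forall x : 'rV[R]_k, x != 0 -> 0 < qform M x.

Definition psdmx (R : realType) (k : nat) (M : 'M[R]_k) : Prop :=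
  sym_mx M /\ forall x : 'rV[R]_k, 0 <= qform M x.

Definition nsdmx (R : realType) (k : nat) (M : 'M[R]_k) : Prop :=
  sym_mx M /\ forall x : 'rV[R]_k, qform M x <= 0.

(* Main.v *)
Require Import Defs.
From HB Require Import structures.
From mathcomp Require Import all_boot all_order all_algebra.
From mathcomp Require Import reals ring lra.
Import Order.TTheory GRing.Theory Num.Theory.
Local Open Scope ring_scope.
Set Implicit Arguments. Unset Strict Implicit.
Section Q.
Variable R : realType.

Lemma qform_tr k (M : 'M[R]_k) x : qform M^T x = qform M x.
Proof.
rewrite /qform.
have -> : x *m M^T *m x^T = (x *m M *m x^T)^T by rewrite !trmx_mul trmxK mulmxA.
by rewrite mxE.
Qed.

Lemma qformD k (M N : 'M[R]_k) x : qform (M + N) x = qform M x + qform N x.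
Proof. by rewrite /qform mulmxDr mulmxDl mxE. Qed.

Lemma qformN k (M : 'M[R]_k) x : qform (- M) x = - qform M x.
Proof. by rewrite /qform mulmxN mulNmx mxE. Qed.

Lemma qformZ k a (M : 'M[R]_k) x : qform (a *: M) x = a * qform M x.
Proof. by rewrite /qform -scalemxAr -scalemxAl mxE. Qed.

Lemma qform_mul k l (M : 'M[R]_(k,l)) (N : 'M[R]_l) x :
  qform (M *m N *m M^T) x = qform N (x *m M).
Proof. by rewrite /qform trmx_mul !mulmxA. Qed.

Lemma qform_block k l (A : 'M[R]_k) B C (D : 'M[R]_l) u v :
  qform (block_mx A B C D) (row_mx u v) =
  qform A u + (u *m B *m v^T) 0 0 + (v *m C *m u^T) 0 0 + qform D v.
Proof.
rewrite /qform mul_row_block tr_row_mx mul_row_col !mulmxDl !mxE.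
by rewrite !addrA; congr (_ + _); rewrite -!addrA; congr (_ + _); rewrite addrC.
Qed.

Lemma qform_skew k (J : 'M[R]_k) x : skew_sym J -> qform J x = 0.
Proof.
move=> hJ; have := qform_tr J x; rewrite hJ qformN => /eqP.
rewrite eq_sym -addr_eq0 -mulr2n mulrn_eq0 /= => /eqP //.
Qed.
End Q.
Lemma chol (R : realType) k (Q : 'M[R]_k) : posdefmx Q ->
  exists W, W \in unitmx /\ W^T *m W = Q.
Proof.
elim: k Q => [|k IH] Q.
  by move=> _; exists 1; rewrite unitmx1; split=> //; rewrite [LHS]flatmx0 [RHS]flatmx0.
move: Q; rewrite -[k.+1]/(1 + k)%N => Q.
rewrite -[Q]submxK.
set a := ulsubmx Q; set b := ursubmx Q; set c := dlsubmx Q; set d := drsubmx Q.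
move=> [hs hp].
have := hs; rewrite /sym_mx tr_block_mx => /eq_block_mx [ha hc hb hd].
set s := a 0 0.
have s_gt0 : 0 < s.
  have := hp (row_mx 1%:M 0).
  rewrite qform_block /qform trmx1 mulmx1 mul1mx ?mul0mx ?trmx0 ?mulmx0 ?mul0mx !mxE ?addr0.
  move=> h; rewrite /s /a !mxE; apply: h.
  apply/eqP => /matrixP /(_ 0 (lshift k 0)); rewrite row_mxEl !mxE eqxx /=.
  by move/eqP; rewrite oner_eq0.
have aE : a = s%:M by rewrite [LHS]mx11_scalar.
set L : 'M[R]_(1 + k) := block_mx 1%:M (s^-1 *: b) 0 1%:M.
set Sch := d - s^-1 *: (c *m b).
have key : block_mx a b c d = L^T *m block_mx a 0 0 Sch *m L.
  rewrite /L tr_block_mx !mulmx_block !trmx1 !trmx0 !mul0mx !mulmx0 !mul1mx !mulmx1 ?add0r ?addr0.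
  have e1 : (s^-1 *: b)^T *m a = c.
    by rewrite aE mul_mx_scalar linearZ /= scalerA mulfV ?gt_eqF // scale1r hb.
  rewrite e1 aE mul_scalar_mx scalerA mulfV ?gt_eqF // scale1r.
  by rewrite /Sch -scalemxAr addrC subrK.
have Spd : posdefmx Sch.
  split.
    by rewrite /sym_mx /Sch linearB /= linearZ /= trmx_mul hb hc hd.
  move=> x x0.
  pose y := row_mx (- (s^-1 *: (x *m c))) x.
  have y0 : y != 0.
    apply: contra x0; rewrite /y -row_mx0 => /eqP/eq_row_mx [_ ->] //.
  have := hp y y0.
  rewrite key -[in X in qform (_ *m _ *m X)](trmxK L) qform_mul.
  have -> : y *m L^T = row_mx 0 x.
    rewrite /y /L tr_block_mx mul_row_block !trmx1 trmx0 !mulmx1 mulmx0 add0r.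
    by rewrite [(s^-1 *: b)^T]linearZ /= -scalemxAr hb addNr.
  rewrite qform_block /qform !mul0mx !mulmx0 !mul0mx !mxE !add0r.
  done.
have [W' [W'u W'E]] := IH _ Spd.
pose Bk : 'M[R]_(1 + k) := block_mx (Num.sqrt s)%:M 0 0 W'.
exists (Bk *m L); split.
  rewrite unitmx_mul !unitmxE /Bk /L !det_ublock !det1 !det_scalar1 ?mulr1 ?mul1r.
  rewrite unitr1 andbT unitrM -unitmxE W'u andbT unitfE.
  by rewrite sqrtr_eq0 -ltNge.
rewrite key trmx_mul !mulmxA; congr (_ *m _); rewrite -!mulmxA; congr (_ *m _).
rewrite /Bk tr_block_mx mulmx_block !trmx0 !mul0mx !mulmx0 !addr0 !add0r W'E.
by rewrite tr_scalar_mx -scalar_mxM -expr2 sqr_sqrtr ?ltW // aE.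
Qed.
Lemma half (R : realType) k l (X : 'M[R]_(k,l)) : 2^-1 *: (X + X) = X.
Proof.
by rewrite -mulr2n -scalerMnr scalerMnl -mulr_natr mulVf ?pnatr_eq0 // scale1r.
Qed.

Lemma psd_block0 (R : realType) n m (Rm : 'M[R]_n) (P : 'M[R]_(n,m)) :
  psdmx (block_mx Rm P P^T 0) -> P = 0.
Proof.
move=> [_ hp]; apply/matrixP => i j; rewrite mxE.
set u : 'rV[R]_n := delta_mx 0 i; set v : 'rV[R]_m := delta_mx 0 j.
have cE : (u *m P *m v^T) 0 0 = P i j.
  by rewrite /u /v -rowE trmx_delta -colE !mxE.
set q := qform Rm u.
have H : forall t, 0 <= q + 2 * t * P i j.
  move=> t; have := hp (row_mx u (t *: v)).
  rewrite qform_block.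
  have -> : (t *: v *m P^T *m u^T) 0 0 = t * P i j.
    rewrite -cE -scalemxAl -scalemxAl mxE; congr (_ * _).
    have -> : v *m P^T *m u^T = (u *m P *m v^T)^T by rewrite !trmx_mul trmxK mulmxA.
    by rewrite mxE.
  have -> : (u *m P *m (t *: v)^T) 0 0 = t * P i j.
    by rewrite linearZ /= -scalemxAr mxE cE.
  have -> : qform 0 (t *: v) = 0 by rewrite /qform mulmx0 mul0mx mxE.
  by rewrite addr0 -addrA -mulr2n -mulrA mulr_natl.
apply/eqP; apply: contraT => hc; move: hc H; set c := P i j => hc H.
have := H (-(q+1)/(2*c)).
have -> : q + 2 * (-(q+1)/(2*c)) * c = -1 by field.
by rewrite lerNr oppr0 ler10.
Qed.

Lemma qform1_gt0 (R : realType) n (x : 'rV[R]_n) : x != 0 -> 0 < qform 1%:M x.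
Proof.
move=> x0.
have [j hj] : exists j, x 0 j != 0.
  apply/existsP; apply: contraR x0; rewrite negb_exists => /forallP h.
  apply/eqP/matrixP => i j; rewrite [i]ord1 mxE; apply/eqP.
  by have := h j; rewrite negbK.
rewrite /qform mulmx1 mxE (bigD1 j) //= mxE.
apply: ltr_wpDr.
  by apply: sumr_ge0 => i _; rewrite mxE -expr2 sqr_ge0.
by rewrite -expr2 lt_def sqr_ge0 andbT sqrf_eq0.
Qed.

Unset Implicit Arguments. Set Strict Implicit.

Theorem corollary3p1 (R : realType) (n m : nat)
  (A : 'M[R]_n) (B : 'M[R]_(n, m)) (C : 'M[R]_(m, n)) (D : 'M[R]_m)
  (hD : D + D^T = 0) :
  (exists T : 'M[R]_n, T \in unitmx /\
     exists (J Rm Q : 'M[R]_n) (F P : 'M[R]_(n, m)) (S N : 'M[R]_m),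
       [/\ skew_sym J, sym_mx Rm, posdefmx Q, sym_mx S
         & skew_sym N] /\ psdmx (block_mx Rm P P^T S) /\
         [/\ invmx T *m A *m T = (J - Rm) *m Q,
               invmx T *m B = F - P,
               C *m T = (F + P)^T *m Q
             & D = S + N])
  <->
  (exists T : 'M[R]_n, T \in unitmx /\
     (T *m B)^T = C *m invmx T /\
     nsdmx ((T *m A *m invmx T)^T + T *m A *m invmx T)).
Proof.
split.
- move=> [T [Tu [J [Rm [Q [F [P [S [N [[hJ hR hQ hS hNn] [hpsd [eA eB eC eD]]]]]]]]]]]].
  have S0 : S = 0.
    move: hD; rewrite eD linearD /= hS hNn => h.
    have h2 : S + S = 0 by rewrite -[RHS]h addrACA subrr addr0.
    by rewrite -(half S) h2 scaler0.
  subst S.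
  have P0 := psd_block0 hpsd; subst P.
  have Rpsd : forall y, 0 <= qform Rm y.
    move=> y; have := hpsd.2 (row_mx y 0).
    by rewrite qform_block /qform !mulmx0 !mul0mx !mxE !addr0.
  rewrite subr0 in eB; rewrite addr0 in eC.
  have [W [Wu WE]] := chol hQ.
  have Tiu : invmx T \in unitmx by rewrite unitmx_inv.
  have T'u : W *m invmx T \in unitmx by rewrite unitmx_mul Wu Tiu.
  exists (W *m invmx T); split => //; split.
    have h : C = (W *m invmx T *m B)^T *m (W *m invmx T).
      rewrite -mulmxA eB trmx_mul mulmxA -(mulmxA _ _ W) WE -eC.
      by rewrite mulmxK.
    by rewrite {1}h mulmxK.
  have KE : W *m invmx T *m A *m invmx (W *m invmx T) = W *m (J - Rm) *m W^T.
    have h : W *m invmx T *m A = W *m (J - Rm) *m W^T *m (W *m invmx T).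
      rewrite !mulmxA -(mulmxA _ W^T W) WE -(mulmxA W (J - Rm) Q) -eA.
      by rewrite !mulmxA mulmxK.
    by rewrite h mulmxK.
  rewrite KE; split.
    by rewrite /sym_mx linearD /= trmxK addrC.
  move=> x; rewrite qformD qform_tr qform_mul qformD qformN qform_skew // add0r.
  by have := Rpsd (x *m W); lra.
- move=> [T' [Tu [hB hN]]].
  set M := T' *m A *m invmx T'.
  exists (invmx T'); split; first by rewrite unitmx_inv.
  exists (2^-1 *: (M - M^T)), (- (2^-1 *: (M + M^T))), 1%:M, (T' *m B), 0, 0, D.
  have hRs : sym_mx (- (2^-1 *: (M + M^T))).
    by rewrite /sym_mx linearN /= linearZ /= linearD /= trmxK addrC.
  split; [split | split].
  + by rewrite /skew_sym linearZ /= linearB /= trmxK -scalerN opprB.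
  + exact: hRs.
  + by split; [exact: trmx1 | exact: qform1_gt0].
  + exact: trmx0.
  + by apply/eqP; rewrite -addr_eq0 addrC hD.
  + split.
      by rewrite /sym_mx tr_block_mx hRs !trmx0.
    move=> x; rewrite -(hsubmxK x) qform_block trmx0 !mulmx0 !mul0mx !mxE !addr0.
    rewrite qformN qformZ qformD qform_tr addrC.
    have := hN.2 (lsubmx x); rewrite -/M qformD qform_tr.
    have -> : qform 0 (rsubmx x) = 0 by rewrite /qform mulmx0 mul0mx mxE.
    have : (0 : R) < 2^-1 by rewrite invr_gt0 ltr0n.
    by nra.
  + rewrite invmxK; split.
    * by rewrite -/M opprK -scalerDr addrCA subrK half mulmx1.
    * by rewrite subr0.
    * by rewrite addr0 mulmx1 hB.
    * by rewrite add0r.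
Qed.
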